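(* In the Data Revocation Game, let $\mathcal I=\mathcal I_1\cup\mathcal I_2\cup\{k\}$ be a partition (disjoint union, $k\notin\mathcal I_1\cup\mathcal I_2$). Put $A_k=\xi_k\ell_k+\theta_k\sum_{i\in\mathcal I_1}\ell_i^2$ and $$\hat d_k=A_k^{-1}-\sum_{j\in\mathcal I_2}d_j^{\max}-\epsilon_k .$$ For $i\in\mathcal I_1$ put $B_i=\xi_i\ell_i+\theta_i\sum_{i'\in\mathcal I_1\setminus\{i\}}\ell_{i'}^2+\theta_i\big(1-\hat d_k/d_k^{\max}\big)\ell_k^2$, and for $j\in\mathcal I_2$ put $B_j=\xi_j\ell_j+\theta_j\sum_{i\in\mathcal I_1}\ell_i^2+\theta_j\big(1-\hat d_k/d_k^{\max}\big)\ell_k^2$. Suppose (a) $\epsilon_i\ge B_i^{-1}-A_k^{-1}+\epsilon_k$ for all $i\in\mathcal I_1$; (b) $\epsilon_j\le B_j^{-1}-A_k^{-1}+\epsilon_k$ for all $j\in\mathcal I_2$; (c) $A_k^{-1}-\sum_{j\in\mathcal I_2\cup\{k\}}d_j^{\max}<\epsilon_k<A_k^{-1}-\sum_{j\in\mathcal I_2}d_j^{\max}$. Then $\hat d_k\in(0,d_k^{\max})$ and the profile $d_i^*=0$ for $i\in\mathcal I_1$, $d_k^*=\hat d_k$, $d_j^*=d_j^{\max}$ for $j\in\mathcal I_2$ is a Nash equilibrium.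
   Context: Data Revocation Game: a finite set of users $\mathcal I=\{1,\dots,I\}$, $I\ge 2$. Each user $i$ has parameters $d_i^{\max}>0$, $\epsilon_i>0$, $\xi_i>0$, $\ell_i>0$, $\theta_i\ge 0$. Each user chooses $d_i\in[0,d_i^{\max}]$. Payoff $$U_i(d_i,\boldsymbol{d_{-i}})=\ln\Big(\sum_{j\in\mathcal I}d_j+\epsilon_i\Big)-\xi_i d_i\ell_i-\theta_i d_i\sum_{j\neq i}\Big(1-\frac{d_j}{d_j^{\max}}\Big)\ell_j^2 .$$ A Nash equilibrium is a profile $(d_i^* )$ with $d_i^*\in[0,d_i^{\max}]$ and $U_i(d_i^*,\boldsymbol{d_{-i}^*})\ge U_i(d_i,\boldsymbol{d_{-i}^*})$ for all $i$ and all $d_i\in[0,d_i^{\max}]$. *)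

(* Defs.v *)
From HB Require Import structures.
From mathcomp Require Import all_boot all_order all_algebra.
From mathcomp Require Import all_classical all_reals all_analysis.
Set Implicit Arguments. Unset Strict Implicit. Unset Printing Implicit Defensive.
Import Order.TTheory GRing.Theory Num.Theory.
Local Open Scope ring_scope.

Definition payoff (R : realType) (T : finType)
  (dmax eps xi ell theta : T -> R) (i : T) (d : T -> R) : R :=
  ln (\sum_(j : T) d j + eps i) - xi i * d i * ell i
  - theta i * d i * (\sum_(j : T | j != i) (1 - d j / dmax j) * ell j ^+ 2).

Definition deviate (R : realType) (T : finType) (d : T -> R) (i : T) (x : R) : T -> R :=
  fun j => if j == i then x else d j.

Definition is_nash (R : realType) (T : finType)
  (dmax eps xi ell theta : T -> R) (d : T -> R) : Prop :=
  forall i : T, (0 <= d i <= dmax i) /\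
    forall x : R, 0 <= x <= dmax i ->
      payoff dmax eps xi ell theta i (deviate d i x)
      <= payoff dmax eps xi ell theta i d.

(* Main.v *)
Require Import Defs.
From HB Require Import structures.
From mathcomp Require Import all_boot all_order all_algebra.
From mathcomp Require Import all_classical all_reals all_analysis.
From mathcomp Require Import ring lra.
Import Order.TTheory GRing.Theory Num.Theory.
Local Open Scope ring_scope.

Lemma best (R : realType) (a c x x0 : R) : 0 < a + x -> 0 < a + x0 ->
  (x - x0) * ((a + x0)^-1 - c) <= 0 ->
  ln (a + x) - x * c <= ln (a + x0) - x0 * c.
Proof.
move=> hy hy0 h.
have e : ln (a + x) - ln (a + x0) = ln (1 + ((a + x) / (a + x0) - 1)).
  by rewrite (addrC 1) subrK ln_div ?posrE.
have hl : ln (a + x) - ln (a + x0) <= (a + x) / (a + x0) - 1.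
  rewrite e; apply: le_ln1Dx.
  have : 0 < (a + x) / (a + x0) by apply: divr_gt0.
  lra.
have e2 : (a + x) / (a + x0) - 1 = (x - x0) * (a + x0)^-1.
  by field; rewrite gt_eqF.
lra.
Qed.

Lemma payoff_dev (R : realType) (T : finType) (dmax eps xi ell theta d : T -> R) i x :
  payoff dmax eps xi ell theta i (deviate d i x) =
  ln ((\sum_j d j - d i) + x + eps i) - x * (xi i * ell i + theta i *
     ((\sum_j (1 - d j / dmax j) * ell j ^+ 2) - (1 - d i / dmax i) * ell i ^+ 2)).
Proof.
rewrite /payoff /deviate eqxx.
rewrite [in LHS](bigD1 i) //= eqxx.
rewrite (@bigD1 _ _ _ _ i xpredT d) //= (@bigD1 _ _ _ _ i xpredT (fun j => (1 - d j / dmax j) * ell j ^+ 2)) //=.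
have -> : \sum_(j | j != i) (if j == i then x else d j) = \sum_(j | j != i) d j.
  by apply: eq_bigr => j /negbTE ->.
have -> : \sum_(j | j != i) (1 - (if j == i then x else d j) / dmax j) * ell j ^+ 2
   = \sum_(j | j != i) (1 - d j / dmax j) * ell j ^+ 2.
  by apply: eq_bigr => j /negbTE ->.
have -> : d i + \sum_(j | j != i) d j - d i + x + eps i = x + \sum_(j | j != i) d j + eps i by lra.
set S := \sum_(j | j != i) _.
ring.

Qed.

Lemma payoff_self (R : realType) (T : finType) (dmax eps xi ell theta d : T -> R) i :
  payoff dmax eps xi ell theta i d = payoff dmax eps xi ell theta i (deviate d i (d i)).
Proof.
congr payoff; apply: boolp.funext => j; rewrite /deviate; by case: eqP => [->|].
Qed.

Lemma best2 (R : realType) (s e c x x0 : R) : 0 < s + x + e -> 0 < s + x0 + e ->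
  (x - x0) * ((s + x0 + e)^-1 - c) <= 0 ->
  ln (s + x + e) - x * c <= ln (s + x0 + e) - x0 * c.
Proof.
have E : forall y, s + y + e = (s + e) + y by move=> y; ring.
rewrite !E; exact: best.
Qed.

Lemma sumU (R : realType) (T : finType) (A B : {set T}) (F : T -> R) :
  [disjoint A & B] -> \sum_(j in A :|: B) F j = \sum_(j in A) F j + \sum_(j in B) F j.
Proof. move=> h; rewrite -bigU //; apply: eq_bigl => j; by rewrite !inE. Qed.

Theorem proposition3 (R : realType) (T : finType)
  (dmax eps xi ell theta : T -> R)
  (hI : (2 <= #|T|)%N)
  (hdmax : forall i, 0 < dmax i) (heps : forall i, 0 < eps i)
  (hxi : forall i, 0 < xi i) (hell : forall i, 0 < ell i)
  (htheta : forall i, 0 <= theta i)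
  (I1 I2 : {set T}) (k : T)
  (hdisj : [disjoint I1 & I2]) (hk1 : k \notin I1) (hk2 : k \notin I2)
  (hcover : I1 :|: I2 :|: [set k] = [set: T]) :
  let A_k := xi k * ell k + theta k * (\sum_(i in I1) ell i ^+ 2) in
  let dhat := A_k^-1 - (\sum_(j in I2) dmax j) - eps k in
  let B1 := fun i => xi i * ell i
              + theta i * (\sum_(i' in I1 | i' != i) ell i' ^+ 2)
              + theta i * (1 - dhat / dmax k) * ell k ^+ 2 in
  let B2 := fun j => xi j * ell j
              + theta j * (\sum_(i in I1) ell i ^+ 2)
              + theta j * (1 - dhat / dmax k) * ell k ^+ 2 in
  (forall i, i \in I1 -> eps i >= (B1 i)^-1 - A_k^-1 + eps k) ->
  (forall j, j \in I2 -> eps j <= (B2 j)^-1 - A_k^-1 + eps k) ->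
  A_k^-1 - (\sum_(j in I2 :|: [set k]) dmax j) < eps k ->
  eps k < A_k^-1 - (\sum_(j in I2) dmax j) ->
  (0 < dhat < dmax k) /\
  is_nash dmax eps xi ell theta
    (fun j => if j \in I1 then 0 else if j == k then dhat else dmax j).
Proof.
move=> A_k dhat B1 B2 ha hb hc1 hc2.
set d := fun j => if j \in I1 then 0 else if j == k then dhat else dmax j.
have hsumI1 : 0 <= \sum_(i in I1) ell i ^+ 2.
  by apply: sumr_ge0 => i _; apply: sqr_ge0.
have hA : 0 < A_k.
  rewrite /A_k; have := hxi k; have := hell k; have := htheta k; have := hsumI1.
  move=> h1 h2 h3 h4; have := mulr_gt0 h4 h3; have := mulr_ge0 h2 h1; lra.
have hsplit : forall F : T -> R, \sum_j F j = \sum_(j in I1) F j + \sum_(j in I2) F j + F k.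
  move=> F; have -> : \sum_j F j = \sum_(j in [set: T]) F j.
    by apply: eq_bigl => j; rewrite inE.
  rewrite -hcover sumU; last by rewrite disjoint_sym disjoints1 !inE negb_or hk1 hk2.
  by rewrite sumU // big_set1.
have hI2nI1 : forall j, j \in I2 -> j \notin I1.
  by move=> j hj; rewrite (disjointFl hdisj hj).
have hI2nk : forall j, j \in I2 -> j != k.
  by move=> j hj; apply/eqP => ejk; move: hk2; rewrite -ejk hj.
have dI1 : forall j, j \in I1 -> d j = 0 by move=> j hj; rewrite /d hj.
have dI2 : forall j, j \in I2 -> d j = dmax j.
  by move=> j hj; rewrite /d (negbTE (hI2nI1 j hj)) (negbTE (hI2nk j hj)).
have dk : d k = dhat by rewrite /d (negbTE hk1) eqxx.
have s1 : \sum_(j in I1) d j = 0.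
  by rewrite big1 // => j hj; rewrite dI1.
have s2 : \sum_(j in I2) d j = \sum_(j in I2) dmax j.
  by apply: eq_bigr => j hj; rewrite dI2.
have hsumd : \sum_j d j = \sum_(j in I2) dmax j + dhat.
  by rewrite hsplit dk s1 s2 add0r.
have hc1' : A_k^-1 - (\sum_(j in I2) dmax j + dmax k) < eps k.
  move: hc1; rewrite sumU ?big_set1 //.
  by rewrite disjoint_sym disjoints1.
have hdhat : 0 < dhat < dmax k by apply/andP; split; rewrite /dhat; lra.
have hdk : 0 < 1 - dhat / dmax k.
  rewrite subr_gt0 ltr_pdivrMr ?hdmax // mul1r; by case/andP: hdhat.
have hQ : \sum_j (1 - d j / dmax j) * ell j ^+ 2
      = \sum_(i in I1) ell i ^+ 2 + (1 - dhat / dmax k) * ell k ^+ 2.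
  have q1 : \sum_(j in I1) (1 - d j / dmax j) * ell j ^+ 2 = \sum_(i in I1) ell i ^+ 2.
    by apply: eq_bigr => j hj; rewrite dI1 // mul0r subr0 mul1r.
  have q2 : \sum_(j in I2) (1 - d j / dmax j) * ell j ^+ 2 = 0.
    by rewrite big1 // => j hj; rewrite dI2 // divff ?subrr ?mul0r // gt_eqF.
  by rewrite hsplit dk q1 q2 addr0.
have hsumI2 : forall j, j \in I2 -> dmax j <= \sum_(j in I2) dmax j.
  move=> j hj; rewrite (bigD1 j hj) /= lerDl.
  by apply: sumr_ge0 => i _; apply: ltW.
split; first exact: hdhat.
move=> i; split.
  rewrite /d; case: ifP => _; first by rewrite lexx ltW.
  case: eqP => [->|_]; first by case/andP: hdhat => h1 h2; rewrite !ltW.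
  by rewrite lexx ltW.
move=> x /andP[hx0 hx1].
rewrite [X in _ <= X]payoff_self !payoff_dev hsumd hQ.
have hS : \sum_(j in I2) dmax j + dhat = A_k^-1 - eps k by rewrite /dhat; lra.
have hI2ge0 : 0 <= \sum_(j in I2) dmax j by apply: sumr_ge0 => j _; apply: ltW.
rewrite hS.
have hAi : 0 < A_k^-1 by rewrite invr_gt0.
case hi1 : (i \in I1).
  have di : d i = 0 by rewrite dI1.
  have hc : xi i * ell i + theta i * (\sum_(i0 in I1) ell i0 ^+ 2
     + (1 - dhat / dmax k) * ell k ^+ 2 - (1 - d i / dmax i) * ell i ^+ 2) = B1 i.
    by rewrite di mul0r subr0 mul1r /B1 (bigD1 i hi1) /=; ring.
  have hB : 0 < B1 i.
    rewrite /B1.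
    have h1 : 0 <= \sum_(i' in I1 | i' != i) ell i' ^+ 2.
      by apply: sumr_ge0 => j _; apply: sqr_ge0.
    have h2 := mulr_ge0 (htheta i) h1.
    have h3 := mulr_ge0 (mulr_ge0 (htheta i) (ltW hdk)) (sqr_ge0 (ell k)).
    have h4 := mulr_gt0 (hxi i) (hell i).
    lra.
  have ha' := ha i hi1.
  have hBi : 0 < (B1 i)^-1 by rewrite invr_gt0.
  rewrite hc di; apply: best2; [lra | lra |].
  apply: mulr_ge0_le0; first lra.
  rewrite subr_le0 -{1}(invrK (B1 i)) lef_pV2 ?posrE //; lra.
case: (eqVneq i k) => [eik | nik].
  subst i.
  have hc : xi k * ell k + theta k * (\sum_(i0 in I1) ell i0 ^+ 2
     + (1 - dhat / dmax k) * ell k ^+ 2 - (1 - d k / dmax k) * ell k ^+ 2) = A_k.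
    by rewrite dk /A_k; ring.
  have hek := heps k.
  rewrite hc dk; apply: best2; rewrite /dhat; [lra | lra |].
  have -> : A_k^-1 - eps k - (A_k^-1 - \sum_(j in I2) dmax j - eps k)
     + (A_k^-1 - \sum_(j in I2) dmax j - eps k) + eps k = A_k^-1 by ring.
  by rewrite invrK subrr mulr0.
have hi2 : i \in I2.
  have : i \in [set: T] by rewrite inE.
  by rewrite -hcover !inE hi1 (negbTE nik) /= orbF.
have di : d i = dmax i by rewrite dI2.
have hc : xi i * ell i + theta i * (\sum_(i0 in I1) ell i0 ^+ 2
   + (1 - dhat / dmax k) * ell k ^+ 2 - (1 - d i / dmax i) * ell i ^+ 2) = B2 i.
  by rewrite di divff ?gt_eqF // subrr mul0r subr0 /B2; ring.
have hB : 0 < B2 i.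
  rewrite /B2.
  have h2 := mulr_ge0 (htheta i) hsumI1.
  have h3 := mulr_ge0 (mulr_ge0 (htheta i) (ltW hdk)) (sqr_ge0 (ell k)).
  have h4 := mulr_gt0 (hxi i) (hell i).
  lra.
have hb' := hb i hi2.
have hBi : 0 < (B2 i)^-1 by rewrite invr_gt0.
have hm := hsumI2 i hi2.
have hei := heps i.
rewrite hc di; apply: best2; rewrite ?hS; [lra | lra |].
apply: mulr_le0_ge0; first lra.
rewrite subr_ge0 -{1}(invrK (B2 i)) lef_pV2 ?posrE //; first lra.
rewrite /dhat in hdhat *; case/andP: hdhat => *; lra.
Qed.
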